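(* In the setting of the two-hidden-layer main theorem (with the matrix $A\in\mathbb{R}^{(K+2)\times(K+2)}$ defined there from $C_w,C_v,C_u$), let $\tilde\rho_x=\max_{i\in[n]}\|x^i\|_1$, $$\zeta_1=\rho_w\sum_{j=1}^{n_2}\Big[\rho_v\sum_{l=1}^{n_1}(\rho_u\tilde\rho_x)^{\alpha_l}\Big]^{\beta_j},\qquad \zeta_2=\rho_w\sum_{j=1}^{n_2}\beta_j\Big[\rho_v\sum_{l=1}^{n_1}(\rho_u\tilde\rho_x)^{\alpha_l}\Big]^{\beta_j}.$$ Then $C_w\le\zeta_1$ and $C_v\le\zeta_2$, and if $$p_w>4(K+2)\zeta_1+5,\quad p_v>2(K+2)\big[2\zeta_2+\|\beta\|_\infty\big]-1,\quad p_u>2(K+2)\|\alpha\|_\infty(2\zeta_2+\|\beta\|_\infty)-1,$$ then $\rho(A)<1$.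
   Context: Here $K,n_1,n_2\in\mathbb{N}$, $\rho_w,\rho_v,\rho_u>0$, $p_w,p_v,p_u\in(1,\infty)$, $p'=p/(p-1)$, $\alpha\in\mathbb{R}^{n_1}$, $\beta\in\mathbb{R}^{n_2}$ with entries $\ge1$, data $x^i\in\mathbb{R}^d_+$. $\rho_x=\max_i\|x^i\|_{p_u'}$, $\theta=\rho_v\Psi^\alpha_{p_v',p_u}(\mathbf{1},\rho_u\rho_x)$, $C_w=\rho_w\Psi^\beta_{p_w',p_v}(\mathbf{1},\theta)$, $C_v=\rho_w\Psi^\beta_{p_w',p_v}(\beta,\theta)$, $C_u=\|\alpha\|_\infty C_v$, where for $p,q\ge1$, $\gamma\in\mathbb{R}^r_{++}$, $\Psi^\gamma_{p,q}(\delta,t)=\big([\sum_{l\in J}(\delta_lt^{\gamma_l})^{pq/(q-\bar\gamma p)}]^{1-\bar\gamma p/q}+\max_{j\in J^c}(\delta_jt^{\gamma_j})^p\big)^{1/p}$ with $J=\{l:\gamma_lp<q\}$, $J^c=\{l:\gamma_lp\ge q\}$, $\bar\gamma=\min_{l\in J}\gamma_l$, empty sums/maxima $=0$. The matrix $A$: for $m,l\in[K]$, $A_{m,l}=4(p_w'-1)C_w$, $A_{m,K+1}=2(p_w'-1)(2C_v+\|\beta\|_\infty)$, $A_{m,K+2}=2(p_w'-1)(2C_u+\|\alpha\|_\infty\|\beta\|_\infty)$, $A_{K+1,l}=2(p_v'-1)(2C_w+1)$, $A_{K+1,K+1}=2(p_v'-1)(2C_v+\|\beta\|_\infty-1)$,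 $A_{K+1,K+2}=2(p_v'-1)(2C_u+\|\alpha\|_\infty\|\beta\|_\infty)$, $A_{K+2,l}=2(p_u'-1)(2C_w+1)$, $A_{K+2,K+1}=2(p_u'-1)(2C_v+\|\beta\|_\infty)$, $A_{K+2,K+2}=2(p_u'-1)(2C_u+\|\alpha\|_\infty\|\beta\|_\infty-1)$. $\rho(A)$ is the spectral radius. *)

(* Defs.v *)
From Stdlib Require Import Reals Lra Lia List ClassicalEpsilon.
Import ListNotations.
Open Scope R_scope.

Definition sumR (n : nat) (f : nat -> R) : R :=
  fold_right Rplus 0 (map f (seq 0 n)).

Definition maxL (l : list nat) (f : nat -> R) : R :=
  fold_right Rmax 0 (map f l).

(* real power x^y for x >= 0, with the convention 0^y = 0 (all exponents used are > 0);
   Stdlib's Rpower would give Rpower 0 y = 1. *)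
Definition rpow (x y : R) : R :=
  if Rle_dec x 0 then 0 else Rpower x y.

Definition conj (p : R) : R := p / (p - 1).

Definition pnorm (p : R) (d : nat) (v : nat -> R) : R :=
  rpow (sumR d (fun k => rpow (Rabs (v k)) p)) (1 / p).
Definition norm1 (d : nat) (v : nat -> R) : R := sumR d (fun k => Rabs (v k)).
Definition infnorm (r : nat) (v : nat -> R) : R := maxL (seq 0 r) (fun k => Rabs (v k)).

Definition Jset (r : nat) (gamma : nat -> R) (p q : R) : list nat :=
  filter (fun l => if Rlt_dec (gamma l * p) q then true else false) (seq 0 r).
Definition Jcset (r : nat) (gamma : nat -> R) (p q : R) : list nat :=
  filter (fun l => if Rlt_dec (gamma l * p) q then false else true) (seq 0 r).
Definition gbar (r : nat) (gamma : nat -> R) (p q : R) : R :=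
  match Jset r gamma p q with
  | [] => 0
  | l :: ls => fold_right Rmin (gamma l) (map gamma ls)
  end.
Definition Psi (r : nat) (gamma : nat -> R) (p q : R) (delta : nat -> R) (t : R) : R :=
  let g := gbar r gamma p q in
  let S := fold_right Rplus 0
             (map (fun l => rpow (delta l * rpow t (gamma l)) (p * q / (q - g * p)))
                  (Jset r gamma p q)) in
  let M := maxL (Jcset r gamma p q) (fun j => rpow (delta j * rpow t (gamma j)) p) in
  rpow (rpow S (1 - g * p / q) + M) (1 / p).

Definition ones : nat -> R := fun _ => 1.

Definition rho_x (pu : R) (n d : nat) (x : nat -> nat -> R) : R :=
  maxL (seq 0 n) (fun i => pnorm (conj pu) d (x i)).
Definition rho_x_tilde (n d : nat) (x : nat -> nat -> R) : R :=
  maxL (seq 0 n) (fun i => norm1 d (x i)).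

Definition theta n1 (alpha : nat -> R) rho_v rho_u pv pu n d x : R :=
  rho_v * Psi n1 alpha (conj pv) pu ones (rho_u * rho_x pu n d x).
Definition Cw n1 n2 alpha beta rho_w rho_v rho_u pw pv pu n d x : R :=
  rho_w * Psi n2 beta (conj pw) pv ones (theta n1 alpha rho_v rho_u pv pu n d x).
Definition Cv n1 n2 alpha beta rho_w rho_v rho_u pw pv pu n d x : R :=
  rho_w * Psi n2 beta (conj pw) pv beta (theta n1 alpha rho_v rho_u pv pu n d x).
Definition Cu n1 n2 alpha beta rho_w rho_v rho_u pw pv pu n d x : R :=
  infnorm n1 alpha * Cv n1 n2 alpha beta rho_w rho_v rho_u pw pv pu n d x.

(* The (K+2)x(K+2) matrix A, 0-indexed: rows/cols 0..K-1 correspond to [K],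
   index K to K+1, index K+1 to K+2 of the paper. *)
Definition Amat (K : nat) (cw cv cu pw pv pu na nb : R) (i j : nat) : R :=
  let row (c : R) (dv du : R) :=
    if (j <? K)%nat then c
    else if (j =? K)%nat then dv else du in
  if (i <? K)%nat then
    row (4 * (conj pw - 1) * cw) (2 * (conj pw - 1) * (2 * cv + nb))
        (2 * (conj pw - 1) * (2 * cu + na * nb))
  else if (i =? K)%nat then
    row (2 * (conj pv - 1) * (2 * cw + 1)) (2 * (conj pv - 1) * (2 * cv + nb - 1))
        (2 * (conj pv - 1) * (2 * cu + na * nb))
  else
    row (2 * (conj pu - 1) * (2 * cw + 1)) (2 * (conj pu - 1) * (2 * cv + nb))
        (2 * (conj pu - 1) * (2 * cu + na * nb - 1)).

(* complex eigenvalue a + i b of a real N x N matrix M (complex numbers as pairs of reals):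
   there is a nonzero complex vector vr + i vi with M (vr + i vi) = (a + i b)(vr + i vi). *)
Definition is_eigenvalue (N : nat) (M : nat -> nat -> R) (a b : R) : Prop :=
  exists vr vi : nat -> R,
    (exists k, (k < N)%nat /\ (vr k <> 0 \/ vi k <> 0)) /\
    forall i, (i < N)%nat ->
      sumR N (fun j => M i j * vr j) = a * vr i - b * vi i /\
      sumR N (fun j => M i j * vi j) = a * vi i + b * vr i.

(* spectral radius = sup of the moduli of the (complex) eigenvalues
   (0 is added to the set, which does not change the value since moduli are >= 0
   and N >= 1 matrices have eigenvalues). *)
Definition eig_moduli (N : nat) (M : nat -> nat -> R) (r : R) : Prop :=
  r = 0 \/ exists a b, is_eigenvalue N M a b /\ r = sqrt (a * a + b * b).
Definition spectral_radius (N : nat) (M : nat -> nat -> R) : R :=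
  epsilon (inhabits 0) (fun r => is_lub (eig_moduli N M) r).

(* Main.v *)
Require Import Defs.
From Stdlib Require Import Reals List Lra Lia ClassicalEpsilon.
Open Scope R_scope.

Definition lsum (l : list nat) (f : nat -> R) : R := fold_right Rplus 0 (map f l).

Lemma lsum_cons a l f : lsum (a :: l) f = f a + lsum l f.
Proof. reflexivity. Qed.

Lemma lsum_le l f g : (forall k, In k l -> f k <= g k) -> lsum l f <= lsum l g.
Proof.
  induction l as [|a l IH]; intros H; [unfold lsum; simpl; lra|].
  change (f a + lsum l f <= g a + lsum l g).
  assert (f a <= g a) by (apply H; left; auto).
  assert (lsum l f <= lsum l g) by (apply IH; intros; apply H; right; auto). lra.
Qed.

Lemma lsum_nonneg l f : (forall k, In k l -> 0 <= f k) -> 0 <= lsum l f.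
Proof.
  induction l as [|a l IH]; intros H; [unfold lsum; simpl; lra|].
  change (0 <= f a + lsum l f).
  assert (0 <= f a) by (apply H; left; auto).
  assert (0 <= lsum l f) by (apply IH; intros; apply H; right; auto). lra.
Qed.

Lemma lsum_elem_le l f k : (forall k, In k l -> 0 <= f k) -> In k l -> f k <= lsum l f.
Proof.
  induction l as [|a l IH]; intros H Hk; simpl in Hk; [contradiction|].
  change (f k <= f a + lsum l f).
  destruct Hk as [<-|Hk].
  - assert (0 <= lsum l f) by (apply lsum_nonneg; intros; apply H; right; auto). lra.
  - assert (0 <= f a) by (apply H; left; auto).
    assert (f k <= lsum l f) by (apply IH; auto; intros; apply H; right; auto). lra.
Qed.

Lemma fold_plus_shift a l : fold_right Rplus a l = fold_right Rplus 0 l + a.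
Proof. induction l; simpl; [lra|rewrite IHl; lra]. Qed.

Lemma sumR_S n f : sumR (S n) f = sumR n f + f n.
Proof.
  unfold sumR. rewrite seq_S, map_app, fold_right_app. simpl.
  rewrite fold_plus_shift. lra.
Qed.

Lemma sumR_const n c f : (forall j, (j < n)%nat -> f j = c) -> sumR n f = INR n * c.
Proof.
  induction n; intros H. { unfold sumR; simpl; lra. }
  rewrite sumR_S, IHn, S_INR, (H n). lra. lia. intros; apply H; lia.
Qed.

Lemma sumR_le n f g : (forall j, (j < n)%nat -> f j <= g j) -> sumR n f <= sumR n g.
Proof.
  intros H. apply (lsum_le (seq 0 n)). intros k Hk. apply in_seq in Hk. apply H; lia.
Qed.

Lemma sumR_scal n c f : sumR n (fun j => c * f j) = c * sumR n f.
Proof. induction n. unfold sumR; simpl; lra. rewrite !sumR_S, IHn; lra. Qed.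

Lemma maxL_cons a l f : maxL (a :: l) f = Rmax (f a) (maxL l f).
Proof. reflexivity. Qed.

Lemma maxL_le l f c : 0 <= c -> (forall k, In k l -> f k <= c) -> maxL l f <= c.
Proof.
  induction l as [|a l IH]; intros Hc H; [unfold maxL; simpl; lra|]; rewrite maxL_cons.
  apply Rmax_lub. apply H; left; auto. apply IH; auto; intros; apply H; right; auto.
Qed.

Lemma maxL_lt l f c : 0 < c -> (forall k, In k l -> f k < c) -> maxL l f < c.
Proof.
  induction l as [|a l IH]; intros Hc H; [unfold maxL; simpl; lra|]; rewrite maxL_cons.
  apply Rmax_lub_lt. apply H; left; auto. apply IH; auto; intros; apply H; right; auto.
Qed.

Lemma maxL_nonneg l f : 0 <= maxL l f.
Proof. induction l; [unfold maxL; simpl; lra|]. rewrite maxL_cons. eapply Rle_trans; [exact IHl| apply Rmax_r]. Qed.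

Lemma maxL_ge l f k : In k l -> f k <= maxL l f.
Proof.
  induction l as [|a l IH]; intros Hk; simpl in Hk; [contradiction|].
  rewrite maxL_cons. destruct Hk as [<-|Hk]. apply Rmax_l.
  eapply Rle_trans; [apply IH; auto| apply Rmax_r].
Qed.

Lemma maxL_mono l f g : (forall k, In k l -> f k <= g k) -> maxL l f <= maxL l g.
Proof.
  intros H. apply maxL_le. apply maxL_nonneg.
  intros k Hk. eapply Rle_trans; [apply H; auto| apply maxL_ge; auto].
Qed.

Lemma maxL_attained l f : 0 < maxL l f -> exists k, In k l /\ maxL l f = f k.
Proof.
  induction l as [|a l IH]; intros H; [unfold maxL in H; simpl in H; lra|]. rewrite maxL_cons in H.
  rewrite maxL_cons. destruct (Rle_dec (f a) (maxL l f)) as [Hle|Hlt].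
  - rewrite Rmax_right by auto. rewrite Rmax_right in H by auto.
    destruct (IH H) as [k [Hk Hk2]]. exists k; split; auto. right; auto.
  - rewrite Rmax_left by lra. exists a; split; auto. left; auto.
Qed.

Lemma rpow_nonneg x y : 0 <= rpow x y.
Proof. unfold rpow. destruct (Rle_dec x 0). lra. unfold Rpower. left; apply exp_pos. Qed.

Lemma rpow_le0 x y : x <= 0 -> rpow x y = 0.
Proof. intros H. unfold rpow. destruct (Rle_dec x 0); [reflexivity|lra]. Qed.

Lemma rpow_pos x y : 0 < x -> rpow x y = Rpower x y.
Proof. intros H. unfold rpow. destruct (Rle_dec x 0); [lra|reflexivity]. Qed.

Lemma Rpower_pos x y : 0 < Rpower x y.
Proof. unfold Rpower; apply exp_pos. Qed.

Lemma rpow_1 x : 0 <= x -> rpow x 1 = x.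
Proof.
  intros H. destruct (Req_dec x 0) as [->|Hx]. apply rpow_le0; lra.
  rewrite rpow_pos by lra. apply Rpower_1; lra.
Qed.

Lemma rpow_rpow x a b : 0 <= x -> rpow (rpow x a) b = rpow x (a * b).
Proof.
  intros H. destruct (Req_dec x 0) as [->|Hx].
  repeat rewrite (rpow_le0 0) by lra. reflexivity.
  rewrite !(rpow_pos x) by lra. rewrite rpow_pos by apply Rpower_pos.
  apply Rpower_mult.
Qed.

Lemma rpow_le x y e : 0 <= x -> x <= y -> 0 < e -> rpow x e <= rpow y e.
Proof.
  intros H1 H2 He. destruct (Req_dec x 0) as [->|Hx].
  rewrite rpow_le0 by lra. apply rpow_nonneg.
  rewrite !rpow_pos by lra. apply Rle_Rpower_l; lra.
Qed.

Lemma Rpower_le_self x s : 0 < x <= 1 -> 1 <= s -> Rpower x s <= x.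
Proof.
  intros [H1 H2] Hs. unfold Rpower.
  assert (Hl : ln x <= 0).
  { destruct (Rle_dec (ln x) 0) as [h|h]; auto. exfalso.
    assert (1 < x) by (apply ln_lt_inv; try lra; rewrite ln_1; lra). lra. }
  rewrite <- (exp_ln x) at 2 by lra.
  assert (s * ln x <= ln x) by nra.
  destruct (Rle_lt_or_eq_dec _ _ H) as [h|h]. left; apply exp_increasing; auto.
  rewrite h; lra.
Qed.

Lemma rpow_superadd A b s : 0 <= A -> 0 <= b -> 1 <= s -> rpow A s + rpow b s <= rpow (A + b) s.
Proof.
  intros HA Hb Hs.
  destruct (Req_dec A 0) as [->|HA'].
  { rewrite (rpow_le0 0) by lra. replace (0 + b) with b by ring; lra. }
  destruct (Req_dec b 0) as [->|Hb'].
  { rewrite (rpow_le0 0) by lra. replace (A + 0) with A by ring; lra. }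
  set (T := A + b). assert (HT : 0 < T) by (unfold T; lra).
  rewrite !rpow_pos by lra.
  assert (EA : A = A / T * T) by (field; lra).
  assert (Eb : b = b / T * T) by (field; lra).
  rewrite EA at 1. rewrite Eb at 1.
  rewrite <- !Rpower_mult_distr; try lra; try (apply Rdiv_lt_0_compat; lra).
  assert (Hs1 : A / T + b / T = 1) by (unfold T; field; lra).
  assert (p1 : 0 < A / T) by (apply Rdiv_lt_0_compat; lra).
  assert (p2 : 0 < b / T) by (apply Rdiv_lt_0_compat; lra).
  assert (h1 : Rpower (A / T) s <= A / T) by (apply Rpower_le_self; auto; lra).
  assert (h2 : Rpower (b / T) s <= b / T) by (apply Rpower_le_self; auto; lra).
  assert (HP := Rpower_pos T s).
  nra.
Qed.

Lemma lsum_rpow l f s : 1 <= s -> (forall k, In k l -> 0 <= f k) ->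
  lsum l (fun k => rpow (f k) s) <= rpow (lsum l f) s.
Proof.
  intros Hs. induction l as [|a l IH]; intros H.
  { unfold lsum; simpl. rewrite rpow_le0 by lra. lra. }
  rewrite !lsum_cons.
  assert (0 <= f a) by (apply H; left; auto).
  assert (0 <= lsum l f) by (apply lsum_nonneg; intros; apply H; right; auto).
  assert (lsum l (fun k => rpow (f k) s) <= rpow (lsum l f) s) by (apply IH; intros; apply H; right; auto).
  pose proof (rpow_superadd (f a) (lsum l f) s). lra.
Qed.

Lemma rpow_inv_le X Y s : 0 <= X -> 0 <= Y -> 0 < s -> X <= rpow Y s -> rpow X (1 / s) <= Y.
Proof.
  intros HX HY Hs H.
  eapply Rle_trans. apply rpow_le; [auto|exact H|apply Rdiv_lt_0_compat; lra].
  rewrite rpow_rpow by auto. replace (s * (1 / s)) with 1 by (field; lra).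
  rewrite rpow_1; lra.
Qed.

Lemma J_split r γ p q f :
  lsum (Jset r γ p q) f + lsum (Jcset r γ p q) f = sumR r f.
Proof.
  unfold Jset, Jcset, sumR. fold (lsum (seq 0 r) f). generalize (seq 0 r) as l.
  induction l as [|a l IH]. unfold lsum; simpl; lra.
  simpl. destruct (Rlt_dec (γ a * p) q); rewrite !lsum_cons; rewrite <- IH; lra.
Qed.

Lemma Jset_in r γ p q k : In k (Jset r γ p q) -> (k < r)%nat /\ γ k * p < q.
Proof.
  unfold Jset. intros H. apply filter_In in H. destruct H as [H1 H2].
  apply in_seq in H1. destruct (Rlt_dec (γ k * p) q); [split; [lia|auto]|discriminate].
Qed.

Lemma Jcset_in r γ p q k : In k (Jcset r γ p q) -> (k < r)%nat.
Proof.
  unfold Jcset. intros H. apply filter_In in H. destruct H as [H1 H2].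
  apply in_seq in H1. lia.
Qed.

Lemma fold_min_in (g : nat -> R) a ls :
  exists m, In m (a :: ls) /\ fold_right Rmin (g a) (map g ls) = g m.
Proof.
  induction ls as [|b ls IH]. exists a; split; [left; auto| reflexivity].
  destruct IH as [m [Hm E]]. simpl. rewrite E.
  destruct (Rle_dec (g b) (g m)).
  - exists b. split. right; left; auto. apply Rmin_left; auto.
  - exists m. split. destruct Hm as [Hm|Hm]; [left; auto| right; right; auto].
    apply Rmin_right; lra.
Qed.

Lemma Psi_le r γ p q δ t : 1 <= p -> 0 < q -> 0 <= t ->
  (forall l, (l < r)%nat -> 0 < γ l) -> (forall l, (l < r)%nat -> 0 <= δ l) ->
  Psi r γ p q δ t <= sumR r (fun l => δ l * rpow t (γ l)).
Proof.
  intros Hp Hq Ht Hγ Hδ.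
  set (a := fun l => δ l * rpow t (γ l)).
  assert (Ha : forall l, (l < r)%nat -> 0 <= a l).
  { intros l Hl. unfold a. apply Rmult_le_pos. apply Hδ; auto. apply rpow_nonneg. }
  set (X := lsum (Jset r γ p q) a). set (Y := lsum (Jcset r γ p q) a).
  assert (HaJ : forall k, In k (Jset r γ p q) -> 0 <= a k).
  { intros k Hk. apply Ha. apply (Jset_in r γ p q k Hk). }
  assert (HaJc : forall k, In k (Jcset r γ p q) -> 0 <= a k).
  { intros k Hk. apply Ha. apply (Jcset_in r γ p q k Hk). }
  assert (HX : 0 <= X) by (apply lsum_nonneg; auto).
  assert (HY : 0 <= Y) by (apply lsum_nonneg; auto).
  assert (HXY : X + Y = sumR r a) by apply J_split.
  assert (HM : maxL (Jcset r γ p q) (fun j => rpow (a j) p) <= rpow Y p).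
  { apply maxL_le. apply rpow_nonneg. intros k Hk. apply rpow_le; [auto| |lra].
    apply lsum_elem_le; auto. }
  set (g := gbar r γ p q).
  assert (HS : rpow (lsum (Jset r γ p q) (fun l => rpow (a l) (p * q / (q - g * p)))) (1 - g * p / q)
               <= rpow X p).
  { unfold g, X. unfold gbar. clear HX HXY.
    destruct (Jset r γ p q) as [|l0 ls] eqn:HJ.
    - unfold lsum; simpl. rewrite rpow_le0 by lra. apply rpow_nonneg.
    - destruct (fold_min_in γ l0 ls) as [m [Hm Em]]. rewrite Em.
      rewrite <- HJ in Hm. apply Jset_in in Hm. destruct Hm as [Hmr Hmq].
      assert (Hg : 0 < γ m) by auto.
      set (D := q - γ m * p).
      assert (HD : 0 < D) by (unfold D; lra).
      assert (HDq : D <= q) by (unfold D; nra).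
      set (s := p * q / D).
      assert (EsD : s * D = p * q) by (unfold s; field; lra).
      assert (Hs : 1 <= s) by nra.
      assert (Ee : 1 - γ m * p / q = D / q) by (unfold D; field; lra).
      rewrite Ee.
      assert (He : 0 < D / q) by (apply Rdiv_lt_0_compat; lra).
      eapply Rle_trans. apply rpow_le.
      + apply lsum_nonneg. intros; apply rpow_nonneg.
      + apply lsum_rpow; auto; rewrite <- HJ; auto.
      + auto.
      + rewrite rpow_rpow. right. f_equal. unfold s; field; lra. apply lsum_nonneg; auto. }
  assert (key : rpow (rpow (lsum (Jset r γ p q) (fun l => rpow (a l) (p * q / (q - g * p)))) (1 - g * p / q)
                 + maxL (Jcset r γ p q) (fun j => rpow (a j) p)) (1 / p) <= sumR r a).
  { eapply Rle_trans. apply rpow_le.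
    - apply Rplus_le_le_0_compat. apply rpow_nonneg. apply maxL_nonneg.
    - apply Rplus_le_compat; [exact HS| exact HM].
    - apply Rdiv_lt_0_compat; lra.
    - rewrite <- HXY. apply rpow_inv_le.
      + apply Rplus_le_le_0_compat; apply rpow_nonneg.
      + lra.
      + lra.
      + apply rpow_superadd; auto. }
  exact key.
Qed.

Lemma tri2 p1 q1 p2 q2 :
  sqrt ((p1 + p2) * (p1 + p2) + (q1 + q2) * (q1 + q2))
  <= sqrt (p1 * p1 + q1 * q1) + sqrt (p2 * p2 + q2 * q2).
Proof.
  assert (A1 : 0 <= p1 * p1 + q1 * q1) by nra.
  assert (A2 : 0 <= p2 * p2 + q2 * q2) by nra.
  set (n1 := sqrt (p1 * p1 + q1 * q1)). set (n2 := sqrt (p2 * p2 + q2 * q2)).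
  assert (H1 : 0 <= n1) by apply sqrt_pos. assert (H2 : 0 <= n2) by apply sqrt_pos.
  assert (E1 : n1 * n1 = p1 * p1 + q1 * q1) by (apply sqrt_sqrt; auto).
  assert (E2 : n2 * n2 = p2 * p2 + q2 * q2) by (apply sqrt_sqrt; auto).
  assert (Hc : p1 * p2 + q1 * q2 <= n1 * n2).
  { destruct (Rle_dec (p1 * p2 + q1 * q2) 0) as [h|h]. nra.
    assert (Hsq : (p1 * p2 + q1 * q2) * (p1 * p2 + q1 * q2) <= (n1 * n2) * (n1 * n2)).
    { replace ((n1 * n2) * (n1 * n2)) with ((n1 * n1) * (n2 * n2)) by ring.
      rewrite E1, E2.
      assert (L : (p1 * p1 + q1 * q1) * (p2 * p2 + q2 * q2) - (p1 * p2 + q1 * q2) * (p1 * p2 + q1 * q2)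
                  = (p1 * q2 - q1 * p2) * (p1 * q2 - q1 * p2)) by ring.
      assert (0 <= (p1 * q2 - q1 * p2) * (p1 * q2 - q1 * p2)) by apply Rle_0_sqr. lra. }
    assert (0 <= n1 * n2) by nra. nra. }
  rewrite <- (sqrt_square (n1 + n2)) by lra.
  apply sqrt_le_1_alt. nra.
Qed.

Lemma tri_sum l P Q :
  sqrt (lsum l P * lsum l P + lsum l Q * lsum l Q)
  <= lsum l (fun j => sqrt (P j * P j + Q j * Q j)).
Proof.
  induction l as [|a l IH].
  { unfold lsum; simpl. replace (0 * 0 + 0 * 0) with 0 by ring. rewrite sqrt_0. lra. }
  rewrite !lsum_cons. eapply Rle_trans. apply tri2. lra.
Qed.

Lemma spec_lt N M v :
  (forall i j, (i < N)%nat -> (j < N)%nat -> 0 <= M i j) ->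
  (forall i, (i < N)%nat -> 0 < v i) ->
  (forall i, (i < N)%nat -> sumR N (fun j => M i j * v j) < v i) ->
  spectral_radius N M < 1.
Proof.
  intros HM Hv Hrs.
  set (rs := fun i => sumR N (fun j => M i j * v j)).
  set (c := maxL (seq 0 N) (fun i => rs i / v i)).
  assert (Hc1 : c < 1).
  { apply maxL_lt. lra. intros i Hi. apply in_seq in Hi.
    assert (Hvi := Hv i ltac:(lia)). assert (Hri := Hrs i ltac:(lia)).
    apply (Rmult_lt_reg_r (v i)); auto. unfold rs. unfold Rdiv.
    rewrite Rmult_assoc, Rinv_l by lra. lra. }
  assert (Hc0 : 0 <= c) by apply maxL_nonneg.
  assert (Hbound : is_upper_bound (eig_moduli N M) c).
  { intros r [-> | [a [b [Hev ->]]]]. auto.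
    destruct Hev as [vr [vi [[k0 [Hk0 Hnz]] Heq]]].
    set (nz := fun j => sqrt (vr j * vr j + vi j * vi j)).
    set (m := maxL (seq 0 N) (fun k => nz k / v k)).
    assert (Hnz0 : 0 < nz k0).
    { unfold nz. apply sqrt_lt_R0.
      destruct Hnz as [h|h].
      - assert (0 < vr k0 * vr k0) by (pose proof (Rsqr_pos_lt _ h); unfold Rsqr in *; lra). nra.
      - assert (0 < vi k0 * vi k0) by (pose proof (Rsqr_pos_lt _ h); unfold Rsqr in *; lra). nra. }
    assert (Hm0 : 0 < m).
    { apply Rlt_le_trans with (nz k0 / v k0).
      apply Rdiv_lt_0_compat; auto.
      apply (maxL_ge (seq 0 N) (fun k => nz k / v k)). apply in_seq; lia. }
    destruct (maxL_attained _ _ Hm0) as [i [Hi Ei]]. apply in_seq in Hi.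
    assert (HiN : (i < N)%nat) by lia.
    assert (Hvi := Hv i HiN).
    assert (Enzi : nz i = m * v i).
    { fold m in Ei. rewrite Ei. field. lra. }
    assert (Hnzi : 0 < nz i) by (rewrite Enzi; nra).
    assert (Hnzj : forall j, (j < N)%nat -> nz j <= m * v j).
    { intros j Hj. assert (Hvj := Hv j Hj).
      assert (nz j / v j <= m) by (apply (maxL_ge (seq 0 N) (fun k => nz k / v k)); apply in_seq; lia).
      apply (Rmult_le_reg_r (/ v j)). apply Rinv_0_lt_compat; auto.
      replace (m * v j * / v j) with m by (field; lra). exact H. }
    assert (Hrsi : rs i <= c * v i).
    { assert (rs i / v i <= c) by (apply (maxL_ge (seq 0 N) (fun k => rs k / v k)); apply in_seq; lia).
      apply (Rmult_le_reg_r (/ v i)). apply Rinv_0_lt_compat; auto.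
      replace (c * v i * / v i) with c by (field; lra). exact H. }
    destruct (Heq i HiN) as [E1 E2].
    assert (Hchain : sqrt (a * a + b * b) * nz i <= c * nz i).
    { unfold nz at 1. rewrite <- sqrt_mult by nra.
      replace ((a * a + b * b) * (vr i * vr i + vi i * vi i)) with
        ((a * vr i - b * vi i) * (a * vr i - b * vi i) + (a * vi i + b * vr i) * (a * vi i + b * vr i)) by ring.
      rewrite <- E1, <- E2.
      eapply Rle_trans. apply (tri_sum (seq 0 N)).
      change (sumR N (fun j => sqrt (M i j * vr j * (M i j * vr j) + M i j * vi j * (M i j * vi j)))
              <= c * nz i).
      apply Rle_trans with (sumR N (fun j => m * (M i j * v j))).
      - apply sumR_le. intros j Hj.
        assert (HMij := HM i j HiN Hj).
        replace (M i j * vr j * (M i j * vr j) + M i j * vi j * (M i j * vi j))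
          with ((M i j * M i j) * (vr j * vr j + vi j * vi j)) by ring.
        rewrite sqrt_mult by nra. rewrite sqrt_square by auto. fold (nz j).
        assert (nz j <= m * v j) by auto. nra.
      - rewrite sumR_scal. fold (rs i). rewrite Enzi. nra. }
    apply (Rmult_le_reg_r (nz i)); auto. }
  assert (Hex : exists r, is_lub (eig_moduli N M) r).
  { destruct (completeness (eig_moduli N M)) as [lub Hlub].
    exists c; auto. exists 0; left; auto. exists lub; auto. }
  unfold spectral_radius.
  pose proof (epsilon_spec (inhabits 0) (fun r => is_lub (eig_moduli N M) r) Hex) as Hs.
  destruct Hs as [_ Hs]. specialize (Hs c Hbound). lra.
Qed.

Lemma Psi_nonneg r γ p q δ t : 0 <= Psi r γ p q δ t.
Proof. unfold Psi. cbv zeta. apply rpow_nonneg. Qed.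

Lemma conj_facts p : 1 < p -> 0 < conj p - 1 /\ (conj p - 1) * (p - 1) = 1 /\ 1 <= conj p.
Proof.
  intros H. unfold conj.
  assert (E : p / (p - 1) - 1 = / (p - 1)) by (field; lra).
  rewrite E. assert (0 < / (p - 1)) by (apply Rinv_0_lt_compat; lra).
  split; [lra|split]. field; lra. lra.
Qed.

Lemma infnorm_ge1 r (f : nat -> R) : (1 <= r)%nat -> (forall l, (l < r)%nat -> 1 <= f l) -> 1 <= infnorm r f.
Proof.
  intros Hr Hf. unfold infnorm.
  eapply Rle_trans; [|apply (maxL_ge (seq 0 r) (fun k => Rabs (f k)) 0%nat)].
  rewrite Rabs_right. apply Hf; lia. assert (1 <= f 0%nat) by (apply Hf; lia). lra.
  apply in_seq; lia.
Qed.

Lemma rho_x_le pu n d x : 1 < pu -> 0 <= rho_x pu n d x <= rho_x_tilde n d x.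
Proof.
  intros Hpu. destruct (conj_facts pu Hpu) as [_ [_ Hc]]. split. apply maxL_nonneg.
  unfold rho_x, rho_x_tilde. apply maxL_mono. intros i _.
  unfold pnorm, norm1. apply rpow_inv_le.
  - apply lsum_nonneg; intros; apply rpow_nonneg.
  - apply lsum_nonneg; intros; apply Rabs_pos.
  - lra.
  - apply (lsum_rpow (seq 0 d) (fun k => Rabs (x i k))). lra. intros; apply Rabs_pos.
Qed.

Theorem mainTheorem14
  (K n1 n2 n d : nat) (rho_w rho_v rho_u pw pv pu : R)
  (alpha beta : nat -> R) (x : nat -> nat -> R)
  (hK : (1 <= K)%nat) (hn1 : (1 <= n1)%nat) (hn2 : (1 <= n2)%nat)
  (hrw : 0 < rho_w) (hrv : 0 < rho_v) (hru : 0 < rho_u)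
  (hpw : 1 < pw) (hpv : 1 < pv) (hpu : 1 < pu)
  (halpha : forall l, (l < n1)%nat -> 1 <= alpha l)
  (hbeta : forall j, (j < n2)%nat -> 1 <= beta j)
  (hx : forall i k, (i < n)%nat -> (k < d)%nat -> 0 <= x i k) :
  let cw := Cw n1 n2 alpha beta rho_w rho_v rho_u pw pv pu n d x in
  let cv := Cv n1 n2 alpha beta rho_w rho_v rho_u pw pv pu n d x in
  let cu := Cu n1 n2 alpha beta rho_w rho_v rho_u pw pv pu n d x in
  let na := infnorm n1 alpha in
  let nb := infnorm n2 beta in
  let inner := rho_v * sumR n1 (fun l => rpow (rho_u * rho_x_tilde n d x) (alpha l)) in
  let zeta1 := rho_w * sumR n2 (fun j => rpow inner (beta j)) in
  let zeta2 := rho_w * sumR n2 (fun j => beta j * rpow inner (beta j)) in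
  cw <= zeta1 /\ cv <= zeta2 /\
  (pw > 4 * INR (K + 2) * zeta1 + 5 ->
   pv > 2 * INR (K + 2) * (2 * zeta2 + nb) - 1 ->
   pu > 2 * INR (K + 2) * na * (2 * zeta2 + nb) - 1 ->
   spectral_radius (K + 2) (Amat K cw cv cu pw pv pu na nb) < 1).
Proof.
  intros cw cv cu na nb inner zeta1 zeta2.
  destruct (conj_facts pw hpw) as [Dw0 [Dw1 Cw1]].
  destruct (conj_facts pv hpv) as [Dv0 [Dv1 Cv1]].
  destruct (conj_facts pu hpu) as [Du0 [Du1 Cu1]].
  destruct (rho_x_le pu n d x hpu) as [Hrx0 Hrx1].
  set (th := theta n1 alpha rho_v rho_u pv pu n d x).
  assert (Hth0 : 0 <= th).
  { unfold th, theta. apply Rmult_le_pos. lra. apply Psi_nonneg. }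
  assert (Hth1 : th <= inner).
  { unfold th, theta, inner. apply Rmult_le_compat_l. lra.
    eapply Rle_trans. apply Psi_le; try lra.
    - apply Rmult_le_pos; lra.
    - intros l Hl. assert (1 <= alpha l) by auto. lra.
    - intros; unfold ones; lra.
    - apply sumR_le. intros j Hj. unfold ones. rewrite Rmult_1_l.
      apply rpow_le. apply Rmult_le_pos; lra. apply Rmult_le_compat_l; lra.
      assert (1 <= alpha j) by auto. lra. }
  assert (Hcw : cw <= zeta1).
  { unfold cw, Cw, zeta1. fold th. apply Rmult_le_compat_l. lra.
    eapply Rle_trans. apply Psi_le; try lra.
    - intros l Hl. assert (1 <= beta l) by auto. lra.
    - intros; unfold ones; lra.
    - apply sumR_le. intros j Hj. unfold ones. rewrite Rmult_1_l.
      apply rpow_le; auto. assert (1 <= beta j) by auto. lra. }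
  assert (Hcv : cv <= zeta2).
  { unfold cv, Cv, zeta2. fold th. apply Rmult_le_compat_l. lra.
    eapply Rle_trans. apply Psi_le; try lra.
    - intros l Hl. assert (1 <= beta l) by auto. lra.
    - intros l Hl. assert (1 <= beta l) by auto. lra.
    - apply sumR_le. intros j Hj. assert (1 <= beta j) by auto.
      apply Rmult_le_compat_l. lra. apply rpow_le; auto. lra. }
  split; [exact Hcw|split; [exact Hcv|]].
  intros Hw Hv Hu.
  assert (Hcw0 : 0 <= cw).
  { unfold cw, Cw. apply Rmult_le_pos. lra. apply Psi_nonneg. }
  assert (Hcv0 : 0 <= cv).
  { unfold cv, Cv. apply Rmult_le_pos. lra. apply Psi_nonneg. }
  assert (Hcu : cu = na * cv) by reflexivity.
  assert (Hna : 1 <= na) by (apply infnorm_ge1; auto).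
  assert (Hnb : 1 <= nb) by (apply infnorm_ge1; auto).
  assert (HS : INR (K + 2) = INR K + 2) by (rewrite plus_INR; simpl; ring).
  rewrite HS in Hw, Hv, Hu.
  assert (HK0 : 0 <= INR K) by apply pos_INR.
  clearbody cw cv cu na nb inner zeta1 zeta2. subst cu.
  set (Dw := conj pw - 1) in *. set (Dv := conj pv - 1) in *. set (Du := conj pu - 1) in *.
  set (B := 2 * cv + nb).
  assert (HB : 1 <= B) by (unfold B; lra).
  assert (HBz : B <= 2 * zeta2 + nb) by (unfold B; lra).
  apply spec_lt with (v := fun j => if (j <? K)%nat then B else if (j =? K)%nat then 2 * cw + 1
                                    else (2 * cw + 1) / na).
  - intros i j Hi Hj. unfold Amat. cbv beta zeta.
    assert (0 <= na * nb - 1) by nra.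
    destruct (i <? K)%nat, (i =? K)%nat, (j <? K)%nat, (j =? K)%nat;
      repeat apply Rmult_le_pos; nra.
  - intros i Hi. destruct (i <? K)%nat. lra. destruct (i =? K)%nat. lra.
    apply Rdiv_lt_0_compat; lra.
  - intros i Hi. replace (K + 2)%nat with (S (S K)) by lia.
    rewrite !sumR_S.
    assert (EK1 : (K <? K)%nat = false) by apply Nat.ltb_irrefl.
    assert (EK2 : (K =? K)%nat = true) by apply Nat.eqb_refl.
    assert (ES1 : (S K <? K)%nat = false) by (apply Nat.ltb_ge; lia).
    assert (ES2 : (S K =? K)%nat = false) by (apply Nat.eqb_neq; lia).
    assert (Hna0 : na <> 0) by lra.
    assert (HwS : 4 * (INR K + 2) * cw <= 4 * (INR K + 2) * zeta1) by nra.
    destruct (Nat.lt_ge_cases i K) as [HiK|HiK].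
    + assert (Ei : (i <? K)%nat = true) by (apply Nat.ltb_lt; auto).
      rewrite (sumR_const K (4 * Dw * cw * B)).
      2:{ intros j Hj. assert (Ej : (j <? K)%nat = true) by (apply Nat.ltb_lt; auto).
          unfold Amat. cbv beta zeta. rewrite Ei, Ej. reflexivity. }
      unfold Amat. cbv beta zeta. rewrite Ei, EK1, EK2, ES1, ES2. cbv iota. change (conj pw - 1) with Dw.
      replace (INR K * (4 * Dw * cw * B) + 2 * Dw * (2 * cv + nb) * (2 * cw + 1) +
               2 * Dw * (2 * (na * cv) + na * nb) * ((2 * cw + 1) / na))
        with (Dw * B * (4 * (INR K + 2) * cw + 4)) by (unfold B; field; auto).
      assert (Dw * (4 * (INR K + 2) * cw + 4) < 1).
      { rewrite <- Dw1. apply Rmult_lt_compat_l; auto. lra. }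
      nra.
    + destruct (Nat.eq_dec i K) as [->|HiK'].
      * rewrite (sumR_const K (2 * Dv * (2 * cw + 1) * B)).
        2:{ intros j Hj. assert (Ej : (j <? K)%nat = true) by (apply Nat.ltb_lt; auto).
            unfold Amat. cbv beta zeta. rewrite EK1, EK2, Ej. reflexivity. }
        unfold Amat. cbv beta zeta. rewrite EK1, EK2, ES1, ES2. cbv iota. change (conj pw - 1) with Dw; change (conj pv - 1) with Dv; change (conj pu - 1) with Du.
        replace (INR K * (2 * Dv * (2 * cw + 1) * B) + 2 * Dv * (2 * cv + nb - 1) * (2 * cw + 1) +
                 2 * Dv * (2 * (na * cv) + na * nb) * ((2 * cw + 1) / na))
          with ((2 * cw + 1) * (2 * Dv * ((INR K + 2) * B - 1))) by (unfold B; field; auto).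
        assert (2 * Dv * ((INR K + 2) * B - 1) < 1).
        { replace (2 * Dv * ((INR K + 2) * B - 1)) with (Dv * (2 * (INR K + 2) * B - 2)) by ring. rewrite <- Dv1.
          apply Rmult_lt_compat_l; auto. nra. }
        nra.
      * assert (i = S K) by lia. subst i.
        rewrite (sumR_const K (2 * Du * (2 * cw + 1) * B)).
        2:{ intros j Hj. assert (Ej : (j <? K)%nat = true) by (apply Nat.ltb_lt; auto).
            unfold Amat. cbv beta zeta. rewrite ES1, ES2, Ej. reflexivity. }
        unfold Amat. cbv beta zeta. rewrite EK1, EK2, ES1, ES2. cbv iota. change (conj pw - 1) with Dw; change (conj pv - 1) with Dv; change (conj pu - 1) with Du.
        replace (INR K * (2 * Du * (2 * cw + 1) * B) + 2 * Du * (2 * cv + nb) * (2 * cw + 1) +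
                 2 * Du * (2 * (na * cv) + na * nb - 1) * ((2 * cw + 1) / na))
          with ((2 * cw + 1) / na * (2 * Du * ((INR K + 2) * na * B - 1))) by (unfold B; field; auto).
        assert (2 * Du * ((INR K + 2) * na * B - 1) < 1).
        { replace (2 * Du * ((INR K + 2) * na * B - 1)) with (Du * (2 * (INR K + 2) * na * B - 2)) by ring. rewrite <- Du1.
          apply Rmult_lt_compat_l; auto.
          assert ((INR K + 2) * na * B <= (INR K + 2) * na * (2 * zeta2 + nb)).
          { apply Rmult_le_compat_l; auto. nra. }
          nra. }
        assert (0 < (2 * cw + 1) / na) by (apply Rdiv_lt_0_compat; lra).
        nra.
Qed.
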